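(* Let $(G,R,\omega)$ be a metric RPP instance and $S$ an edge-minimizing Eulerian extension for it. Then every vertex $v\in V$ is incident to at most two edges of $S$ (counted with multiplicity).
   Context: An RPP instance is a triple $(G,R,\omega)$, where $G=(V,E)$ is an undirected multigraph, $\omega\colon E\to\mathbb{N}$ assigns weights (parallel edges have equal weight), and $R$ is a nonempty multiset of edges of $G$. The instance is metric if $G$ contains an edge between any two vertices and the weights satisfy the triangle inequality $\omega(\{u,w\})\le\omega(\{u,v\})+\omega(\{v,w\})$ for all $u,v,w\in V$. For a multiset $X$ of edges: - $\omega(X)$ and $|X|$ are the weight and cardinality counted with multiplicity; - $V(X)$ is the set of vertices incident to edges of $X$; - $G\langle X\rangle=(V(X),X)$ is the multigraph formed by $X$ (no isolated vertices); - $\uplus$ denotes multiset sum. A vertex is balanced in a multigraph if its degree is even (a loop counts 2), and imbalanced otherwise. A multigraph without isolated vertices is Eulerian if it is connected and all vertices are balanced. An Eulerian extension for $(G,R,\omega)$ is a multiset $S$ of edges of $G$ such that $G\langle R\uplus S\rangle$ is Eulerian. It is edge-minimizing if there is no Eulerian extension $S'$ with $|S'|<|S|$ and $\omega(S')\le\omega(S)$. *)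

(* Defs.v *)
From mathcomp Require Import all_boot.
Set Implicit Arguments. Unset Strict Implicit. Unset Printing Implicit Defensive.

(* An undirected multigraph G = (V,E): V and E finite types, each edge e has
   two endpoints [ends e] (an ordered pair used as an unordered pair; a loop
   has both components equal).
   Multisets of edges are sequences (order irrelevant): cardinality = size,
   multiset sum = concatenation. *)

Section RPP.
Variables (V E : finType) (ends : E -> V * V) (w : E -> nat).

Definition joins (e : E) (u v : V) : bool :=
  (ends e == (u, v)) || (ends e == (v, u)).

Definition parallel_equal_weight : Prop :=
  forall e f : E, joins e (ends f).1 (ends f).2 -> w e = w f.

Definition weight (X : seq E) : nat := \sum_(e <- X) w e.

Definition incident (e : E) (v : V) : bool :=
  ((ends e).1 == v) || ((ends e).2 == v).

(* degree of v in G<X>; a loop counts 2 *)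
Definition degree (X : seq E) (v : V) : nat :=
  \sum_(e <- X) (((ends e).1 == v) + ((ends e).2 == v)).

Definition inVX (X : seq E) (v : V) : bool := has (fun e => incident e v) X.

Definition adjX (X : seq E) : rel V := fun u v => has (fun e => joins e u v) X.

Definition eulerian (X : seq E) : Prop :=
  (forall u v, inVX X u -> inVX X v -> connect (adjX X) u v) /\
  (forall v, inVX X v -> ~~ odd (degree X v)).

Definition eulerian_extension (R S : seq E) : Prop := eulerian (R ++ S).

Definition edge_minimizing (R S : seq E) : Prop :=
  eulerian_extension R S /\
  ~ (exists S' : seq E, eulerian_extension R S' /\
       size S' < size S /\ weight S' <= weight S).

Definition metric : Prop :=
  (forall u v : V, u != v -> exists e : E, joins e u v) /\
  (forall (u v x : V) (e1 e2 e3 : E),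
      joins e1 u x -> joins e2 u v -> joins e3 v x -> w e1 <= w e2 + w e3).

End RPP.

(* Main.v *)
Require Import Defs.
From mathcomp Require Import all_boot zify.
Set Implicit Arguments. Unset Strict Implicit. Unset Printing Implicit Defensive.

Lemma joinsC (V E : finType) (ends : E -> V * V) e u v :
  joins ends e u v = joins ends e v u.
Proof. by rewrite /joins orbC. Qed.

Lemma adjX_sym (V E : finType) (ends : E -> V * V) X : symmetric (adjX ends X).
Proof. move=> u v; rewrite /adjX; apply: eq_has => e; exact: joinsC. Qed.

Lemma ddeg (V E : finType) (ends : E -> V * V) e x y u :
  joins ends e x y ->
  ((ends e).1 == u) + ((ends e).2 == u) = (x == u) + (y == u).
Proof.
rewrite /joins; case: (ends e) => a b /orP[] /eqP [-> ->] //=; by rewrite addnC.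
Qed.

Lemma dinc (V E : finType) (ends : E -> V * V) e x y u :
  joins ends e x y -> incident ends e u = (x == u) || (y == u).
Proof.
rewrite /joins /incident; case: (ends e) => a b /orP[] /eqP [-> ->] //=; by rewrite orbC.
Qed.

Lemma joins_cases (V E : finType) (ends : E -> V * V) e x y a b :
  joins ends e x y -> joins ends e a b ->
  (a = x /\ b = y) \/ (a = y /\ b = x).
Proof.
rewrite /joins; case: (ends e) => p q /orP[] /eqP [-> ->] /orP[] /eqP [-> ->]; tauto.
Qed.

Lemma degree_cat (V E : finType) (ends : E -> V * V) A B u :
  degree ends (A ++ B) u = degree ends A u + degree ends B u.
Proof. by rewrite /degree big_cat. Qed.

Lemma degree_cons (V E : finType) (ends : E -> V * V) e A u :
  degree ends (e :: A) u = ((ends e).1 == u) + ((ends e).2 == u) + degree ends A u.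
Proof. by rewrite /degree big_cons. Qed.

Lemma degree0 (V E : finType) (ends : E -> V * V) X u :
  ~~ inVX ends X u -> degree ends X u = 0.
Proof.
move=> /hasPn H; rewrite /degree big_seq big1 // => e /H; rewrite /incident negb_or.
by case/andP => /negPf -> /negPf ->.
Qed.

Lemma eulerian_perm (V E : finType) (ends : E -> V * V) X Y :
  perm_eq X Y -> eulerian ends X -> eulerian ends Y.
Proof.
move=> pXY [C D].
have hm : X =i Y := perm_mem pXY.
have iv : forall u, inVX ends Y u = inVX ends X u.
  by move=> u; rewrite /inVX; apply: eq_has_r.
have ad : adjX ends Y =2 adjX ends X.
  by move=> a b; rewrite /adjX; apply: eq_has_r.
split.
- move=> u v; rewrite !iv => Hu Hv; rewrite (eq_connect ad); exact: C.
- move=> v; rewrite iv /degree -(perm_big _ pXY); exact: D.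
Qed.

Lemma euler_repl (V E : finType) (ends : E -> V * V) X X' :
  eulerian ends X ->
  (forall u, inVX ends X' u -> inVX ends X u) ->
  (forall u, odd (degree ends X' u) = odd (degree ends X u)) ->
  (forall a b, adjX ends X a b -> connect (adjX ends X') a b) ->
  eulerian ends X'.
Proof.
move=> [C D] Hv Hd Ha; split.
- move=> u v /Hv Hu /Hv Hv'; apply: (connect_sub Ha); exact: C.
- by move=> v /Hv Hv'; rewrite Hd; apply: D.
Qed.

Lemma sum_pred1 (T : finType) (P : pred T) (x : T) :
  \sum_(u | P u) (x == u) = P x.
Proof.
case Px: (P x).
  rewrite (bigD1 x) //= eqxx big1 // => u /andP[_]; by rewrite eq_sym => /negPf ->.
by rewrite big1 // => u Pu; case: eqP => // E'; move: Px; rewrite E' Pu.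
Qed.

Lemma handshake (V E : finType) (ends : E -> V * V) X x :
  ~~ odd (\sum_(u | connect (adjX ends X) x u) degree ends X u).
Proof.
set C := connect (adjX ends X) x.
have -> : \sum_(u | C u) degree ends X u = \sum_(e <- X) (C (ends e).1).*2.
  rewrite /degree exchange_big /= big_seq [RHS]big_seq; apply: eq_bigr => e eX.
  rewrite big_split /= !sum_pred1 -addnn.
  suff -> : C (ends e).2 = C (ends e).1 by [].
  have aj : adjX ends X (ends e).1 (ends e).2.
    by apply/hasP; exists e => //; rewrite /joins -surjective_pairing eqxx.
  rewrite /C; apply/idP/idP => H.
    by apply: connect_trans H _; rewrite (sym_connect_sym (adjX_sym ends X)); apply: connect1.
  by apply: connect_trans H (connect1 aj).
by rewrite -(@big_morph _ _ double 0 addn 0 addn doubleD (erefl _)) odd_double.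
Qed.

Lemma adj_sub (V E : finType) (ends : E -> V * V) A B :
  {subset A <= B} -> forall a b, adjX ends A a b -> adjX ends B a b.
Proof. by move=> sAB a b /hasP[g gA jg]; apply/hasP; exists g => //; apply: sAB. Qed.

Lemma conn_sub (V E : finType) (ends : E -> V * V) A B :
  {subset A <= B} -> forall a b, connect (adjX ends A) a b -> connect (adjX ends B) a b.
Proof. move=> sAB; apply: connect_sub => a b /(adj_sub sAB); exact: connect1. Qed.

Lemma conn_symE (V E : finType) (ends : E -> V * V) A a b :
  connect (adjX ends A) a b = connect (adjX ends A) b a.
Proof. exact: (sym_connect_sym (adjX_sym ends A)). Qed.

Lemma core (V E : finType) (ends : E -> V * V) (w : E -> nat) R T e1 e2 e3 v a1 a2 a3 :
  metric ends w ->
  joins ends e1 v a1 -> joins ends e2 v a2 -> joins ends e3 v a3 ->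
  eulerian ends (R ++ [:: e1, e2, e3 & T]) ->
  connect (adjX ends (R ++ T)) v a1 ->
  exists S', eulerian ends (R ++ S') /\ size S' < size T + 3 /\
             weight w S' <= w e1 + w e2 + w e3 + weight w T.
Proof.
move=> [Mex Mtri] j1 j2 j3 HX Hc.
have jdeg := fun u => ddeg u j1; have jdeg2 := fun u => ddeg u j2; have jdeg3 := fun u => ddeg u j3.
case: (eqVneq a1 a2) => [Ea|Na].
- exists (e3 :: T); split; last first.
    split; first by rewrite /= ; lia.
    by rewrite /weight big_cons; lia.
  have sub' : {subset R ++ e3 :: T <= R ++ [:: e1, e2, e3 & T]}.
    by move=> g; rewrite !mem_cat !inE; case/orP=> [->|/orP[->|->]]; rewrite ?orbT.
  have sY : {subset R ++ T <= R ++ e3 :: T}.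
    by move=> g; rewrite !mem_cat !inE; case/orP=> ->; rewrite ?orbT.
  apply: (euler_repl HX).
  + by move=> u /hasP[g gX ig]; apply/hasP; exists g => //; apply: sub'.
  + move=> u; rewrite !degree_cat !degree_cons jdeg jdeg2 jdeg3 -Ea.
    have -> : degree ends R u + ((v == u) + (a1 == u) + ((v == u) + (a1 == u) +
      ((v == u) + (a3 == u) + degree ends T u))) =
      degree ends R u + ((v == u) + (a3 == u) + degree ends T u) + 2 * ((v == u) + (a1 == u)) by lia.
    by rewrite [odd (_ + 2 * _)]oddD oddM /= addbF.
  + have c1 : connect (adjX ends (R ++ e3 :: T)) v a1 by apply: conn_sub Hc.
    move=> a b /hasP[g]; rewrite !mem_cat !inE => gX jg.
    case/or4P: gX => [gR|/eqP Eg|/eqP Eg|/orP[/eqP Eg|gT]].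
    * by apply: connect1; apply/hasP; exists g => //; rewrite mem_cat gR.
    * rewrite Eg in jg; case: (joins_cases j1 jg) => [[-> ->]|[-> ->]] //.
      by rewrite conn_symE.
    * rewrite Eg in jg; rewrite -Ea in j2; case: (joins_cases j2 jg) => [[-> ->]|[-> ->]] //.
      by rewrite conn_symE.
    * by apply: connect1; apply/hasP; exists g => //; rewrite mem_cat Eg inE eqxx orbT.
    * by apply: connect1; apply/hasP; exists g => //; rewrite mem_cat inE gT !orbT.
- have [f jf] := Mex a1 a2 Na.
  have wf : w f <= w e1 + w e2.
    by apply: (Mtri a1 v a2 f e1 e2) => //; rewrite joinsC.
  exists (e3 :: f :: T); split; last first.
    split; first by rewrite /= ; lia.
    by rewrite /weight !big_cons; rewrite /weight in wf; lia.
  have sY : {subset R ++ T <= R ++ [:: e3, f & T]}.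
    by move=> g; rewrite !mem_cat !inE; case/orP=> ->; rewrite ?orbT.
  apply: (euler_repl HX).
  + move=> u /hasP[g]; rewrite !mem_cat !inE => gX ig.
    case/or4P: gX => [gR|/eqP Eg|/eqP Eg|gT].
    * by apply/hasP; exists g => //; rewrite mem_cat gR.
    * by apply/hasP; exists g => //; rewrite mem_cat Eg !inE eqxx !orbT.
    * rewrite Eg (dinc _ jf) in ig; case/orP: ig => ig.
        by apply/hasP; exists e1; [rewrite mem_cat !inE eqxx !orbT | rewrite (dinc _ j1) ig orbT].
      by apply/hasP; exists e2; [rewrite mem_cat !inE eqxx !orbT | rewrite (dinc _ j2) ig orbT].
    * by apply/hasP; exists g => //; rewrite mem_cat !inE gT !orbT.
  + move=> u; rewrite !degree_cat !degree_cons jdeg jdeg2 jdeg3 (ddeg _ jf).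
    have -> : degree ends R u + ((v == u) + (a1 == u) + ((v == u) + (a2 == u) +
      ((v == u) + (a3 == u) + degree ends T u))) =
      degree ends R u + ((v == u) + (a3 == u) + ((a1 == u) + (a2 == u) + degree ends T u)) + 2 * (v == u) by lia.
    by rewrite [odd (_ + 2 * _)]oddD oddM /= addbF.
  + have c1 : connect (adjX ends (R ++ [:: e3, f & T])) v a1 by apply: conn_sub Hc.
    have c2 : connect (adjX ends (R ++ [:: e3, f & T])) v a2.
      apply: connect_trans c1 (connect1 _); apply/hasP; exists f => //.
      by rewrite mem_cat !inE eqxx !orbT.
    move=> a b /hasP[g]; rewrite !mem_cat !inE => gX jg.
    case/or4P: gX => [gR|/eqP Eg|/eqP Eg|/orP[/eqP Eg|gT]].
    * by apply: connect1; apply/hasP; exists g => //; rewrite mem_cat gR.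
    * rewrite Eg in jg; case: (joins_cases j1 jg) => [[-> ->]|[-> ->]] //.
      by rewrite conn_symE.
    * rewrite Eg in jg; case: (joins_cases j2 jg) => [[-> ->]|[-> ->]] //.
      by rewrite conn_symE.
    * by apply: connect1; apply/hasP; exists g => //; rewrite mem_cat Eg inE eqxx orbT.
    * by apply: connect1; apply/hasP; exists g => //; rewrite mem_cat !inE gT !orbT.
Qed.

Lemma some_conn (V E : finType) (ends : E -> V * V) R T e1 e2 e3 v a1 a2 a3 :
  joins ends e1 v a1 -> joins ends e2 v a2 -> joins ends e3 v a3 ->
  eulerian ends (R ++ [:: e1, e2, e3 & T]) ->
  [|| connect (adjX ends (R ++ T)) v a1, connect (adjX ends (R ++ T)) v a2
    | connect (adjX ends (R ++ T)) v a3].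
Proof.
move=> j1 j2 j3 [_ D].
apply/negPn/negP; rewrite !negb_or => /and3P[n1 n2 n3].
set C := connect (adjX ends (R ++ T)) v.
have hs := handshake ends (R ++ T) v.
have ev : ~~ odd (\sum_(u | C u) degree ends (R ++ [:: e1, e2, e3 & T]) u).
  apply: (big_ind (fun n => ~~ odd n)) => //.
    by move=> x y ox oy; rewrite oddD (negPf ox) (negPf oy).
  move=> u _; case iv: (inVX ends (R ++ [:: e1, e2, e3 & T]) u); first exact: D.
  by rewrite degree0 ?iv.
have eq : \sum_(u | C u) degree ends (R ++ [:: e1, e2, e3 & T]) u =
   \sum_(u | C u) degree ends (R ++ T) u + 
   (\sum_(u | C u) (v == u) + \sum_(u | C u) (v == u) + \sum_(u | C u) (v == u) +
   (\sum_(u | C u) (a1 == u) + \sum_(u | C u) (a2 == u) + \sum_(u | C u) (a3 == u))).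
  rewrite -!big_split /=; apply: eq_bigr => u _.
  rewrite !degree_cat !degree_cons (ddeg u j1) (ddeg u j2) (ddeg u j3); lia.
move: ev; rewrite eq !sum_pred1 /C (negPf n1) (negPf n2) (negPf n3) connect0 /=.
by rewrite !addn0 oddD (negPf hs).
Qed.

Lemma inc_joins (V E : finType) (ends : E -> V * V) e v :
  incident ends e v -> exists a, joins ends e v a.
Proof.
rewrite /incident /joins; case: (ends e) => x y /= /orP[/eqP->|/eqP->].
  by exists y; rewrite eqxx.
by exists x; rewrite eqxx orbT.
Qed.

Theorem mainTheorem7 (V E : finType) (ends : E -> V * V) (w : E -> nat)
  (R S : seq E) :
  parallel_equal_weight ends w ->
  R != [::] ->
  metric ends w ->
  edge_minimizing ends w R S ->
  forall v : V, count (fun e => incident ends e v) S <= 2.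
Proof.
move=> _ _ M [Heul Hmin] v; rewrite leqNgt; apply/negP => H3.
set p := fun e => incident ends e v. rewrite -/p in H3.
have pS := perm_filterC p S.
have sF : size (filter p S) = count p S by rewrite size_filter.
have mF : forall e, e \in filter p S -> p e by move=> e; rewrite mem_filter => /andP[].
move: sF mF pS; case: (filter p S) => [|e1 [|e2 [|e3 F']]] /= sF mF pS; try (exfalso; lia).
set T := F' ++ filter (predC p) S.
have pST : perm_eq [:: e1, e2, e3 & T] S by apply/permPl; exact: pS.
have [a1 j1] := inc_joins (mF e1 (mem_head _ _)).
have [a2 j2] : exists a, joins ends e2 v a.
  by apply: inc_joins; apply: mF; rewrite !inE eqxx orbT.
have [a3 j3] : exists a, joins ends e3 v a.
  by apply: inc_joins; apply: mF; rewrite !inE eqxx !orbT.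
have HX : eulerian ends (R ++ [:: e1, e2, e3 & T]).
  apply: eulerian_perm Heul; rewrite perm_cat2l perm_sym; exact: pST.
have sz : size S = size T + 3 by rewrite -(perm_size pST) /=; lia.
have wt : weight w S = w e1 + w e2 + w e3 + weight w T.
  rewrite /weight.
  have -> : \sum_(e <- S) w e = \sum_(e <- [:: e1, e2, e3 & T]) w e by apply: perm_big; rewrite perm_sym.
  by rewrite /weight !big_cons; lia.
have fin : forall S', eulerian ends (R ++ S') -> size S' < size T + 3 ->
    weight w S' <= w e1 + w e2 + w e3 + weight w T -> False.
  by move=> S' h1 h2 h3; apply: Hmin; exists S'; rewrite sz wt.
case/or3P: (some_conn j1 j2 j3 HX) => Hc.
- have [S' [h1 [h2 h3]]] := core M j1 j2 j3 HX Hc; exact: fin S' h1 h2 h3.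
- have HX' : eulerian ends (R ++ [:: e2, e1, e3 & T]).
    apply: eulerian_perm HX; rewrite perm_cat2l; apply/permPl; exact: (perm_catCA [:: e1] [:: e2] (e3 :: T)).
  have [S' [h1 [h2 h3]]] := core M j2 j1 j3 HX' Hc.
  apply: (fin S' h1 h2); lia.
- have HX' : eulerian ends (R ++ [:: e3, e1, e2 & T]).
    apply: eulerian_perm HX; rewrite perm_cat2l; apply/permPl; exact: (perm_catCA [:: e1; e2] [:: e3] T).
  have [S' [h1 [h2 h3]]] := core M j3 j1 j2 HX' Hc.
  apply: (fin S' h1 h2); lia.
Qed.
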